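(* Let $d$ be an odd positive integer. For $k=0,1$ consider the formal power series $\mathcal A_{1,k}(c_1,c_2,d)=\sum_{r\ge0}\alpha^{r,d}_{1,k}\in\mathbb Z[[c_1,c_2]]$ (so $\alpha^{r,d}_{1,k}$ is its homogeneous part of degree $r+k$, with $\deg c_1=1,\deg c_2=2$). Then $$\mathcal A_{1,0}(c_1,c_2,d)=\frac{d}{\big(1+\frac{d-1}{2}c_1\big)\big(1-\frac{d+1}{2}c_1\big)+d^2c_2},\qquad \mathcal A_{1,1}(c_1,c_2,d)=\frac{1+\frac{d-1}{2}c_1}{\big(1+\frac{d-1}{2}c_1\big)\big(1-\frac{d+1}{2}c_1\big)+d^2c_2}-1.$$
   Context: Ground field $k$ algebraically closed of characteristic $0$ or $>d$. $E$ is the standard representation of $\mathrm{GL}_2$ with Chern classes $c_1,c_2$; $W_n=\mathrm{Sym}^n(E^\vee)$ is the space of binary forms of degree $n$, $\mathrm{GL}_2$ acting by $f\mapsto f\circ A^{-1}$. $T$ is the diagonal torus, $A^*_T=\mathbb Z[l_1,l_2]$, $c_1=-(l_1+l_2)$, $c_2=l_1l_2$. On $\mathbb P(W_n^{\oplus m})$ the equivariant hyperplane class is normalized so that the coordinate hyperplane where the coefficient of $x^{n-j}y^j$ in one summand vanishes has class (hyperplane class)$+(n-j)l_1+jl_2$; $H$ is this class on $\mathbb P(W_d^{\oplus r+1})$, and $A^*_{\mathrm{GL}_2}(\mathbb P(W_d^{\oplus r+1}))=\mathbb Z[c_1,c_2,H]/(P_{r,d}(H))$, $P_{r,d}(H)=\prod_{j=0}^d(H+(d-j)l_1+jl_2)^{r+1}$.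 For $r\ge0$: $\widetilde Z_1=\mathbb P(W_1)\times\mathbb P(W_{d-1}^{\oplus r+1})$, $\pi_1([c],[g_1,\dots,g_{r+1}])=[cg_1,\dots,cg_{r+1}]$, $h_1$ the pullback of the hyperplane class of $\mathbb P(W_1)$, $\alpha^{r,d}_{1,k}(H)=\pi_{1*}(h_1^k)$ identified with its unique homogeneous representative of degree $r+k$ in $\mathbb Z[c_1,c_2,H]$, and $\alpha^{r,d}_{1,k}:=\alpha^{r,d}_{1,k}(\tfrac{d+1}{2}c_1)\in\mathbb Z[c_1,c_2]$. *)

(* Defs.v *)
From HB Require Import structures.
From mathcomp Require Import all_boot all_order all_algebra.
From mathcomp Require Import mpoly.
Set Implicit Arguments. Unset Strict Implicit. Unset Printing Implicit Defensive.
Import Order.TTheory GRing.Theory Num.Theory.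
Local Open Scope ring_scope.

(* A^*_T = Z[l1,l2] *)
Notation RT := {mpoly int[2]}.
Definition l1 : RT := 'X_(@Ordinal 2 0 isT).
Definition l2 : RT := 'X_(@Ordinal 2 1 isT).
(* Chern classes of the standard representation E of GL_2 *)
Definition c1 : RT := - (l1 + l2).
Definition c2 : RT := l1 * l2.

(* weight of the coordinate x^(n-j) y^j of W_n *)
Definition wt (n j : nat) : RT := (n - j)%:R * l1 + j%:R * l2.

(* P_{r,n}(H) = prod_{j=0}^n (H + (n-j) l1 + j l2)^(r+1): the relation of
   A_T(P(W_n^{+(r+1)})) = Z[l1,l2][H]/(P_{r,n}(H)) *)
Definition Prel (r n : nat) : {poly RT} :=
  \prod_(j < n.+1) ('X + (wt n j)%:P) ^+ r.+1.

(* Equivariant integral over P(V), dim V = N, with A_T(P(V)) = A_T[H]/(P(H)),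
   P monic of degree N:  \int_{P(V)} Q(H) = coefficient of H^(N-1) in Q mod P.
   Stated over an arbitrary integral domain A of coefficients. *)
Definition integralP (A : idomainType) (P Q : {poly A}) : A :=
  (Q %% P)`_(size P).-2.

(* Z~_1 = P(W_1) x P(W_{d-1}^{+(r+1)}); h1, h2 its hyperplane classes.
   A_T(Z~_1) = Z[l1,l2][h1,h2]/(Prel 0 1 (h1), Prel r (d-1) (h2)).
   Elements of Z[l1,l2][h1,h2] are represented in {poly {poly RT}}:
   outer variable h1, inner variable h2.  The integral over the product is the
   iterated integral (first over P(W_1) in h1, then over P(W_{d-1}^{r+1})). *)
Definition h1 : {poly {poly RT}} := 'X.
Definition h2 : {poly {poly RT}} := ('X)%:P.

Definition integralZ1 (d r : nat) (F : {poly {poly RT}}) : RT :=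
  integralP (Prel r d.-1) (integralP (map_poly polyC (Prel 0 1)) F).

(* pi_1^* : A_T(P(W_d^{r+1})) -> A_T(Z~_1), H |-> h1 + h2 *)
Definition pullback1 (Q : {poly RT}) : {poly {poly RT}} :=
  (map_poly (fun c : RT => c%:P%:P) Q).[h1 + h2].

(* alpha is (the reduced = homogeneous representative of)
   pi_{1*}(h1^k) in A_T(P(W_d^{r+1})) = Z[l1,l2][H]/(P_{r,d}(H)):
   it has H-degree < (d+1)(r+1) and satisfies the defining duality/projection
   formula  \int_X alpha * Q = \int_{Z~_1} h1^k * pi_1^*Q  for every class Q. *)
Definition is_pushforward1 (d r k : nat) (alpha : {poly RT}) : Prop :=
  (size alpha <= (d.+1 * r.+1))%N /\
  forall Q : {poly RT},
    integralP (Prel r d) (alpha * Q) = integralZ1 d r (h1 ^+ k * pullback1 Q).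

(* alpha^{r,d}_{1,k} := alpha^{r,d}_{1,k}((d+1)/2 * c1) *)
Definition eval_half (d : nat) (alpha : {poly RT}) : RT :=
  alpha.[((d.+1)./2)%:R * c1].

Definition is_homog (n : nat) (p : RT) : bool :=
  all (fun m => mdeg m == n) (msupp p).

(* Formal power series in t over RT, as coefficient sequences.  The
   injective ring map Z[[l1,l2]] -> RT[[t]], f(l1,l2) |-> f(t l1, t l2),
   sends a series with homogeneous parts A_n to sum_n A_n t^n. *)
Definition fps := nat -> RT.
Definition fps_of_poly (p : {poly RT}) : fps := fun n => p`_n.
Definition fps_mul (A B : fps) : fps :=
  fun n => \sum_(i < n.+1) A i * B (n - i)%N.

(* Image in RT[[t]] of the series sum_r alpha^{r,d}_{1,k}, whose degree r+k
   homogeneous part is alpha^{r,d}_{1,k}. *)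
Definition series_A (k : nat) (a : nat -> RT) : fps :=
  fun n => if (k <= n)%N then a (n - k)%N else 0.

(* Image in RT[t] of the denominator
   (1 + (d-1)/2 c1)(1 - (d+1)/2 c1) + d^2 c2  (c1 of degree 1, c2 of degree 2) *)
Definition denomT (d : nat) : {poly RT} :=
  (1 + ((d.-1)./2%:R * c1)%:P * 'X) * (1 - ((d.+1)./2%:R * c1)%:P * 'X)
  + ((d ^ 2)%:R * c2)%:P * 'X ^+ 2.

(* Image of the numerator 1 + (d-1)/2 c1 *)
Definition numT1 (d : nat) : {poly RT} := 1 + ((d.-1)./2%:R * c1)%:P * 'X.

(* Main.v *)
Require Import Defs.
From HB Require Import structures.
From mathcomp Require Import all_boot all_order all_algebra.
From mathcomp Require Import mpoly.
From mathcomp Require Import ring zify.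
Import GRing.Theory.
Local Open Scope ring_scope.
Set Implicit Arguments. Unset Strict Implicit. Unset Printing Implicit Defensive.

Section Gen.
Variable A : idomainType.
Implicit Types P Q S T F G : {poly A}.

Lemma mon_unit P : P \is monic -> lead_coef P \in GRing.unit.
Proof. by move=> /eqP ->; rewrite unitr1. Qed.

Lemma intZ P F c : P \is monic -> integralP P (c *: F) = c * integralP P F.
Proof. by move=> mP; rewrite /integralP Pdiv.IdomainUnit.modpZl ?mon_unit // coefZ. Qed.

Lemma intD P F G : P \is monic -> integralP P (F + G) = integralP P F + integralP P G.
Proof. by move=> mP; rewrite /integralP Pdiv.IdomainUnit.modpD ?mon_unit // coefD. Qed.

Lemma intN P F : P \is monic -> integralP P (- F) = - integralP P F.
Proof. by move=> mP; rewrite /integralP Pdiv.IdomainUnit.modpN ?mon_unit // coefN. Qed.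

Lemma intB P F G : P \is monic -> integralP P (F - G) = integralP P F - integralP P G.
Proof. by move=> mP; rewrite intD // intN. Qed.

Lemma intC P F c : P \is monic -> integralP P (c%:P * F) = c * integralP P F.
Proof. by move=> mP; rewrite mul_polyC intZ. Qed.

Lemma int_small P F : (size F < size P)%N -> integralP P F = F`_((size P).-2).
Proof. by move=> h; rewrite /integralP modp_small. Qed.

Lemma intL S T Q : S \is monic -> T \is monic ->
  integralP (S * T) (S * Q) = integralP T Q.
Proof.
move=> mS mT.
have uT := mon_unit mT.
set R := Q %% T.
have sR : (size R < size T)%N by rewrite ltn_modp monic_neq0.
have eQ := Pdiv.IdomainUnit.divp_eq uT Q.
have mST : S * T \is monic by rewrite monicMl.
have e : S * Q = (Q %/ T) * (S * T) + S * R.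
  by rewrite {1}eQ -/R mulrDr mulrA [S * _]mulrC mulrA.
have sSR : (size (S * R)%R < size (S * T)%R)%N.
  have [->|nR] := eqVneq R 0; first by rewrite mulr0 size_poly0 size_poly_gt0 monic_neq0.
  rewrite (size_monicM mS nR) (size_monicM mS (monic_neq0 mT)).
  have hS : (0 < size S)%N by rewrite size_poly_gt0 monic_neq0.
  move: sR hS; rewrite -/R; set a := size R; set b := size T; set c := size S; rewrite -!subn1; lia.
rewrite /integralP -(Pdiv.IdomainUnit.modpP (mon_unit mST) e sSR) -/R.
rewrite size_monicM ?monic_neq0 //.
have hS : (0 < size S)%N by rewrite size_poly_gt0 monic_neq0.
have hT : (0 < size T)%N by rewrite size_poly_gt0 monic_neq0.
case: (ltnP (size T) 2) => hT2.
  have -> : R = 0 by apply/eqP; rewrite -size_poly_eq0; move: sR hT2; case: (size R) => //; case: (size T) => //= [[]] //.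
  by rewrite mulr0 !coef0.
have hR : forall j, ((size T).-1 <= j)%N -> R`_j = 0.
  by move=> j hj; apply: nth_default; move: sR hj; set a := size R; set b := size T; lia.
have hS0 : forall j, (size S <= j)%N -> S`_j = 0 by move=> j hj; apply: nth_default.
have lS : S`_(size S).-1 = 1 by move: mS; rewrite qualifE /lead_coef => /eqP.
have hi : ((size S).-1 < ((size S + size T).-1.-2).+1)%N.
  by move: hS hT2; set a := size S; set b := size T; lia.
rewrite coefM (bigD1 (Ordinal hi)) //=.
have -> : ((size S + size T).-1.-2 - (size S).-1)%N = (size T).-2.
  by move: hS hT2; set a := size S; set b := size T; lia.
rewrite lS mul1r big1 ?addr0 // => i /eqP ni.
have ne : (i : nat) != (size S).-1 by apply/eqP=> h; apply: ni; apply: val_inj.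
have [lt|ge] := ltnP i (size S).-1.
  rewrite hR ?mulr0 //.
  move: (ltn_ord i) lt hS hT2; set a := size S; set b := size T; set c := (i : nat); lia.
rewrite hS0 ?mul0r //.
move: ge ne hS; set a := size S; set c := (i : nat); lia.
Qed.

Lemma intTr T Q c : T \is monic ->
  integralP (T \Po ('X + c%:P)) (Q \Po ('X + c%:P)) = integralP T Q.
Proof.
move=> mT; set sg := 'X + c%:P.
have s2 : size sg = 2 := size_XaddC c.
have mT' : T \Po sg \is monic.
  by rewrite monicE lead_coef_comp ?s2 // (eqP mT) lead_coefXaddC expr1n mul1r.
have uT := mon_unit mT.
set R := Q %% T.
have sR : (size R < size T)%N by rewrite ltn_modp monic_neq0.
have eQ := Pdiv.IdomainUnit.divp_eq uT Q.
have e : Q \Po sg = (Q %/ T \Po sg) * (T \Po sg) + (R \Po sg).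
  by rewrite {1}eQ comp_polyD comp_polyM.
have sRT : (size (R \Po sg) < size (T \Po sg))%N by rewrite !size_comp_poly2.
rewrite /integralP -(Pdiv.IdomainUnit.modpP (mon_unit mT') e sRT) size_comp_poly2 // -/R.
have hT : (0 < size T)%N by rewrite size_poly_gt0 monic_neq0.
have [eR|ltR] : size R = (size T).-1 \/ (size R <= (size T).-2)%N.
  move: sR hT; set a := size R; set b := size T => sR hT.
  case: (ltnP a b.-1) => h; [right | left]; lia.
  have -> : (size T).-2 = (size R).-1 by rewrite eR.
  rewrite -{1}(size_comp_poly2 R s2).
  have -> : (R \Po sg)`_(size (R \Po sg)).-1 = lead_coef (R \Po sg) by [].
  by rewrite lead_coef_comp ?s2 // lead_coefXaddC expr1n mulr1.
by rewrite !nth_default ?size_comp_poly2.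
Qed.

Lemma intI1 a b F :
  (b - a) * integralP (('X + a%:P) * ('X + b%:P)) F = F.[- a] - F.[- b].
Proof.
set P := (('X + a%:P) * ('X + b%:P)) : {poly A}.
have mP : P \is monic by rewrite monicMl ?monicXaddC.
have sP : size P = 3%N by rewrite size_monicM ?monicXaddC ?monic_neq0 ?monicXaddC // !size_XaddC.
have uP := mon_unit mP.
set R := F %% P.
have sR3 : (size R < 3)%N by rewrite -sP ltn_modp monic_neq0.
have sR : (size R <= 2)%N by [].

have eF := Pdiv.IdomainUnit.divp_eq uP F.
have ev : forall x, P.[x] = 0 -> F.[x] = R`_0 + R`_1 * x.
  move=> x Px; rewrite {1}eF hornerD hornerM Px mulr0 add0r (horner_coef_wide _ sR).
  by rewrite !big_ord_recr big_ord0 /= add0r expr0 mulr1 expr1.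
rewrite /integralP sP /= -/R !ev; first by ring.
  by rewrite /P hornerM !hornerD !hornerX !hornerC addNr mulr0.
by rewrite /P hornerM !hornerD !hornerX !hornerC addNr mul0r.
Qed.
End Gen.

Lemma lnz : l2 - l1 != 0.
Proof.
apply/negP => /eqP h.
have := congr1 (meval (fun i : 'I_2 => (i : nat)%:Z)) h.
by rewrite mevalB /l1 /l2 !mevalXU meval0.
Qed.



Section G.
Variables (R : idomainType) (x y : R).
Hypothesis hxy : y - x != 0.

Definition wtg (n j : nat) : R := (n - j)%:R * x + j%:R * y.
Definition Prelg (r n : nat) : {poly R} := \prod_(j < n.+1) ('X + (wtg n j)%:P) ^+ r.+1.
Definition integralZ1g (d r : nat) (F : {poly {poly R}}) : R :=
  integralP (Prelg r d.-1) (integralP (map_poly polyC (Prelg 0 1)) F).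
Definition pullbackg (Q : {poly R}) : {poly {poly R}} :=
  (map_poly (fun c : R => c%:P%:P) Q).['X + ('X)%:P].
Definition pushg (d r k : nat) (alpha : {poly R}) : Prop :=
  (size alpha <= (d.+1 * r.+1))%N /\
  forall Q : {poly R},
    integralP (Prelg r d) (alpha * Q) = integralZ1g d r ('X ^+ k * pullbackg Q).

Lemma evalFg (k : nat) (Q : {poly R}) (v : {poly R}) :
  ('X ^+ k * pullbackg Q).[v] = v ^+ k * (Q \Po ('X + v)).
Proof.
rewrite hornerM hornerXn; congr (_ * _).
rewrite /pullbackg.
have := horner_map (horner_eval v) (map_poly (fun c : R => c%:P%:P) Q) ('X + ('X)%:P).
move=> E; rewrite -[LHS]/(horner_eval v _) -E.
rewrite -map_poly_comp /comp_poly.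
congr (_.[_]).
  by apply: eq_map_poly => c /=; rewrite /horner_eval hornerC.
by rewrite [LHS](@horner_evalE _ v) hornerD hornerX hornerC addrC.
Qed.

Lemma sizeXm (c : R) m : size (('X + c%:P) ^+ m) = m.+1.
Proof.
have := size_exp ('X + c%:P) m; rewrite size_XaddC /= mul1n.
have : (0 < size (('X + c%:P) ^+ m))%N by rewrite size_poly_gt0 monic_neq0 // monic_exp ?monicXaddC.
by case: (size _) => // s _ /= ->.
Qed.

Lemma prodXm (n m : nat) (c : nat -> R) :
  (\prod_(j < n) ('X + (c j)%:P) ^+ m) \is monic /\
  size (\prod_(j < n) ('X + (c j)%:P) ^+ m) = (n * m).+1.
Proof.
elim: n => [|n [IHm IHs]]; first by rewrite big_ord0 monic1 size_poly1.
have mX : ('X + (c n)%:P) ^+ m \is monic by rewrite monic_exp ?monicXaddC.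
rewrite big_ord_recr /=; split; first by rewrite monicMl.
rewrite size_monicM ?monic_neq0 // IHs sizeXm mulSn; lia.
Qed.

Lemma Prelg_monic r n : Prelg r n \is monic.
Proof. by case: (prodXm n.+1 r.+1 (wtg n)). Qed.

Lemma Prelg_size r n : size (Prelg r n) = (n.+1 * r.+1).+1.
Proof. by case: (prodXm n.+1 r.+1 (wtg n)). Qed.

Definition Tdg (r d : nat) : {poly R} := \prod_(j < d) ('X + (wtg d j)%:P) ^+ r.+1.
Definition T0g (r d : nat) : {poly R} := \prod_(j < d) ('X + (wtg d j.+1)%:P) ^+ r.+1.

Lemma PrelgR r d : Prelg r d = ('X + (wtg d d)%:P) ^+ r.+1 * Tdg r d.
Proof. by rewrite /Prelg big_ord_recr mulrC. Qed.

Lemma PrelgL r d : Prelg r d = ('X + (wtg d 0)%:P) ^+ r.+1 * T0g r d.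
Proof. by rewrite /Prelg big_ord_recl. Qed.

Lemma Tdg_monic r d : Tdg r d \is monic.
Proof. by case: (prodXm d r.+1 (wtg d)). Qed.
Lemma T0g_monic r d : T0g r d \is monic.
Proof. by case: (prodXm d r.+1 (fun j => wtg d j.+1)). Qed.

Lemma compTdg r d : Prelg r d = Tdg r d.+1 \Po ('X + (- x)%:P).
Proof.
rewrite /Tdg rmorph_prod /Prelg; apply: eq_bigr => j _.
have hj : (j <= d)%N by rewrite -ltnS.
have -> : wtg d j = - x + wtg d.+1 j by rewrite /wtg (subSn hj) mulrSr; ring.
by rewrite rmorphXn /= comp_polyD comp_polyX comp_polyC -addrA -polyCD.
Qed.

Lemma compT0g r d : Prelg r d = T0g r d.+1 \Po ('X + (- y)%:P).
Proof.
rewrite /T0g rmorph_prod /Prelg; apply: eq_bigr => j _.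
have -> : wtg d j = - y + wtg d.+1 j.+1 by rewrite /wtg subSS -[j.+1]addn1 natrD; ring.
by rewrite rmorphXn /= comp_polyD comp_polyX comp_polyC -addrA -polyCD.
Qed.

Definition aXg d : {poly R} := 'X + (wtg d d)%:P.
Definition bXg d : {poly R} := 'X + (wtg d 0)%:P.
Definition S0g d m : {poly R} := \sum_(i < m) aXg d ^+ (m.-1 - i) * bXg d ^+ i.
Definition alpha0g d r k : {poly R} :=
  if k is 0 then (d%:R : R) *: S0g d r.+1
  else (- x) *: ((d%:R : R) *: S0g d r.+1) + bXg d ^+ r.+1.

Lemma key0g d r : (y - x) *: alpha0g d r 0 = aXg d ^+ r.+1 - bXg d ^+ r.+1.
Proof.
rewrite /alpha0g subrXX /S0g scalerA -mul_polyC; congr (_ * _).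
rewrite /aXg /bXg opprD addrACA subrr add0r -polyCB /wtg subnn subn0; congr (_%:P); ring.
Qed.

Lemma key1g d r : (y - x) *: alpha0g d r 1 = (- x) *: aXg d ^+ r.+1 - (- y) *: bXg d ^+ r.+1.
Proof.
have k0 := key0g d r; rewrite /alpha0g in k0 *.
move: k0; set Y := (_ *: S0g d r.+1); set a := aXg d ^+ r.+1; set b := bXg d ^+ r.+1.
rewrite -!mul_polyC => k0.
rewrite mulrDr mulrA mulrC mulrA [_ * (y - x)%:P]mulrC k0.
rewrite !polyCN polyCB; ring.
Qed.

Lemma keyg d r k : (k <= 1)%N ->
  (y - x) *: alpha0g d r k = (- x) ^+ k *: aXg d ^+ r.+1 - (- y) ^+ k *: bXg d ^+ r.+1.
Proof.
case: k => [|[|]] // _; first by rewrite key0g !expr0 !scale1r.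
by rewrite key1g !expr1.
Qed.


Lemma sizeA d r k : (k <= 1)%N -> (size (alpha0g d r k) <= r.+2)%N.
Proof.
move=> hk; rewrite -(size_scale _ hxy) keyg //.
apply: leq_trans (size_polyD _ _) _; rewrite size_polyN geq_max.
by rewrite !(leq_trans (size_scale_leq _ _)) // /aXg /bXg sizeXm.
Qed.

Lemma LHSg d r (alpha : {poly R}) (x1 x2 : R) (Q : {poly R}) :
  (y - x) *: alpha = x1 *: aXg d ^+ r.+1 - x2 *: bXg d ^+ r.+1 ->
  (y - x) * integralP (Prelg r d) (alpha * Q) =
  x1 * integralP (Tdg r d) Q - x2 * integralP (T0g r d) Q.
Proof.
move=> e.
have mP := Prelg_monic r d.
have EA : integralP (Prelg r d) (aXg d ^+ r.+1 * Q) = integralP (Tdg r d) Q.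
  by rewrite PrelgR intL // ?monic_exp ?monicXaddC ?Tdg_monic.
have EB : integralP (Prelg r d) (bXg d ^+ r.+1 * Q) = integralP (T0g r d) Q.
  by rewrite PrelgL intL // ?monic_exp ?monicXaddC ?T0g_monic.
by rewrite -intZ // scalerAl e mulrBl intB // -!scalerAl !intZ // EA EB.
Qed.

Lemma P01 : map_poly polyC (Prelg 0 1) = ('X + (x%:P)%:P) * ('X + (y%:P)%:P).
Proof.
rewrite /Prelg big_ord_recr big_ord_recr big_ord0 /= mul1r !expr1 rmorphM /= !map_polyXaddC /wtg /=.
congr (('X + _%:P%:P) * ('X + _%:P%:P)). 
  by rewrite subn0 mul1r mul0r addr0.
by rewrite subnn mul0r add0r mul1r.
Qed.

Lemma RHSg d r k (Q : {poly R}) : (0 < d)%N ->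
  (y - x) * integralZ1g d r ('X ^+ k * pullbackg Q) =
  (- x) ^+ k * integralP (Tdg r d) Q - (- y) ^+ k * integralP (T0g r d) Q.
Proof.
case: d => [|d] // _.
rewrite /integralZ1g P01 /= -intZ ?Prelg_monic // -mul_polyC polyCB intI1.
rewrite !evalFg -!polyCN -!rmorphXn /= intB ?Prelg_monic // !intC ?Prelg_monic //.
have E1 : integralP (Prelg r d) (Q \Po ('X + (- x)%:P)) = integralP (Tdg r d.+1) Q.
  by rewrite compTdg intTr // Tdg_monic.
have E2 : integralP (Prelg r d) (Q \Po ('X + (- y)%:P)) = integralP (T0g r d.+1) Q.
  by rewrite compT0g intTr // T0g_monic.
by rewrite E1 E2.
Qed.

Lemma pushA d r k : (0 < d)%N -> (k <= 1)%N -> pushg d r k (alpha0g d r k).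
Proof.
move=> hd hk; split.
  apply: leq_trans (sizeA _ _ hk) _; rewrite mulSn; move: hd; case: d => // d _; lia.
move=> Q; apply: (mulfI hxy).
by rewrite (LHSg _ (keyg d r hk)) RHSg.
Qed.

Lemma push_uniq d r k a b : pushg d r k a -> pushg d r k b -> a = b.
Proof.
move=> [sa ea] [sb eb].
have mP := Prelg_monic r d.
set D := a - b.
have eD : forall Q, integralP (Prelg r d) (D * Q) = 0.
  by move=> Q; rewrite mulrBl intB // ea eb subrr.
have sD : (size D <= d.+1 * r.+1)%N.
  by apply: leq_trans (size_polyD _ _) _; rewrite size_polyN geq_max sa sb.
apply/eqP; rewrite -subr_eq0 -/D; apply/negPn/negP => nD.
set N := (d.+1 * r.+1)%N in sD.
have sD0 : (0 < size D)%N by rewrite size_poly_gt0.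
have := eD ('X^(N - size D)).
rewrite int_small; last by rewrite size_mulXn // Prelg_size -/N; lia.
rewrite Prelg_size -/N coefMXn.
have -> : (N.+1.-2 < N - size D)%N = false by apply/negbTE; rewrite -leqNgt; lia.
have -> : (N.+1.-2 - (N - size D))%N = (size D).-1 by lia.
by move/eqP; rewrite -lead_coefE lead_coef_eq0 (negPf nD).
Qed.

End G.


Section S.
Variables (R : idomainType) (x y : R).
Hypothesis hxy : y - x != 0.

Definition c1g : R := - (x + y).
Definition c2g : R := x * y.
Definition denomTg (d : nat) : {poly R} :=
  (1 + ((d.-1)./2%:R * c1g)%:P * 'X) * (1 - ((d.+1)./2%:R * c1g)%:P * 'X)
  + ((d ^ 2)%:R * c2g)%:P * 'X ^+ 2.
Definition numT1g (d : nat) : {poly R} := 1 + ((d.-1)./2%:R * c1g)%:P * 'X.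

Definition fps_mulg (u v : nat -> R) : nat -> R :=
  fun n => \sum_(i < n.+1) u i * v (n - i)%N.
Definition series_Ag (k : nat) (a : nat -> R) : nat -> R :=
  fun n => if (k <= n)%N then a (n - k)%N else 0.

Lemma evalA d r k h : (k <= 1)%N ->
  (y - x) * (alpha0g x y d r k).[h] =
  (- x) ^+ k * (h + wtg x y d d) ^+ r.+1 - (- y) ^+ k * (h + wtg x y d 0) ^+ r.+1.
Proof.
move=> hk; rewrite -hornerZ keyg // hornerD hornerN !hornerZ !horner_exp.
by rewrite /aXg /bXg !hornerD !hornerX !hornerC.
Qed.

Lemma fps_0 u v : fps_mulg u v 0 = u 0%N * v 0%N.
Proof. by rewrite /fps_mulg big_ord_recr big_ord0 /= add0r. Qed.

Lemma fps_1 u v : fps_mulg u v 1 = u 0%N * v 1%N + u 1%N * v 0%N.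
Proof. by rewrite /fps_mulg big_ord_recr big_ord_recr big_ord0 /= add0r subnn. Qed.

Lemma fps_S2 u v n : (forall j, (3 <= j)%N -> v j = 0) ->
  fps_mulg u v n.+2 = u n * v 2%N + u n.+1 * v 1%N + u n.+2 * v 0%N.
Proof.
move=> hv; rewrite /fps_mulg big_ord_recr big_ord_recr big_ord_recr /=.
rewrite big1 ?add0r; last by move=> i _; rewrite hv ?mulr0 //; move: (ltn_ord i) => /=; lia.
have -> : (n.+2 - n = 2)%N by lia.
have -> : (n.+2 - n.+1 = 1)%N by lia.
by rewrite subnn.
Qed.

Lemma coef3 (u v : R) j :
  (1 + u%:P * 'X + v%:P * 'X ^+ 2 : {poly R})`_j =
  if j == 0%N then 1 else if j == 1%N then u else if j == 2%N then v else 0.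
Proof.
rewrite !coefD coef1 !coefCM coefX coefXn.
by case: j => [|[|[|j]]] /=; rewrite ?mulr0 ?mulr1 ?addr0 ?add0r.
Qed.

Variable f : nat.
Let d := f.*2.+1.
Let F : R := f%:R.
Let A : R := (- (F + 1) * (x + y)) + (2 * F + 1) * y.
Let B : R := (- (F + 1) * (x + y)) + (2 * F + 1) * x.

Lemma hd1 : (d.+1)./2 = f.+1.
Proof. by rewrite /d -[f.*2.+2]/((f.+1).*2) doubleK. Qed.
Lemma hd2 : (d.-1)./2 = f.
Proof. by rewrite /d /= doubleK. Qed.
Lemma hdR : (d%:R : R) = 2 * F + 1.
Proof. by rewrite /d /F -addn1 natrD -mul2n natrM. Qed.

Lemma evA : ((d.+1)./2)%:R * c1g + wtg x y d d = A.
Proof. by rewrite hd1 /wtg subnn hdR /c1g /A /F mulrSr; ring. Qed.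
Lemma evB : ((d.+1)./2)%:R * c1g + wtg x y d 0 = B.
Proof. by rewrite hd1 /wtg subn0 hdR /c1g /B /F mulrSr; ring. Qed.

Lemma denom_eq : denomTg d = 1 + (- (A + B))%:P * 'X + (A * B)%:P * 'X ^+ 2.
Proof.
rewrite /denomTg hd1 hd2.
have -> : (d ^ 2)%:R = (d%:R : R) ^+ 2 by rewrite natrX.
rewrite hdR.
set p := (f%:R * c1g); set q := (f.+1%:R * c1g); set s := ((2 * F + 1) ^+ 2 * c2g).
have -> : (1 + p%:P * 'X) * (1 - q%:P * 'X) + s%:P * 'X ^+ 2 =
   1 + (p%:P - q%:P) * 'X + (s%:P - p%:P * q%:P) * 'X ^+ 2 by ring.
rewrite -polyCB -polyCM -polyCB; congr (1 + _%:P * _ + _%:P * _).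
  by rewrite /p /q /A /B /c1g /F mulrSr; ring.
by rewrite /p /q /s /A /B /c1g /c2g /F mulrSr; ring.
Qed.

Lemma numT_eq : numT1g d = 1 + (F * c1g)%:P * 'X.
Proof. by rewrite /numT1g hd2. Qed.


Lemma Dcoef j : (denomTg d)`_j =
  if j == 0%N then 1 else if j == 1%N then - (A + B) else if j == 2%N then A * B else 0.
Proof. by rewrite denom_eq coef3. Qed.

Lemma Dhi j : (3 <= j)%N -> (denomTg d)`_j = 0.
Proof. by rewrite Dcoef; case: j => [|[|[|j]]]. Qed.

Lemma series0 (a : nat -> R) :
  (forall r, (y - x) * a r = A ^+ r.+1 - B ^+ r.+1) ->
  fps_mulg (series_Ag 0 a) (fun n => (denomTg d)`_n) =1 (fun n => ((d%:R : R)%:P)`_n).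
Proof.
move=> ha n.
have sA : forall m, series_Ag 0 a m = a m by move=> m; rewrite /series_Ag leq0n subn0.
apply: (mulfI hxy); rewrite coefC.
case: n => [|[|n]].
- rewrite fps_0 sA Dcoef /= mulr1 ha expr1 hdR /A /B /F; ring.
- rewrite fps_1 !sA !Dcoef /= mulr1.
  have -> : (y - x) * (a 0%N * - (A + B) + a 1%N) = - (A + B) * ((y - x) * a 0%N) + (y - x) * a 1%N by ring.
  rewrite !ha mulr0; ring.
- rewrite (fps_S2 _ _ Dhi) !sA !Dcoef /= mulr1 mulr0.
  have -> : (y - x) * (a n * (A * B) + a n.+1 * - (A + B) + a n.+2) =
    (A * B) * ((y - x) * a n) - (A + B) * ((y - x) * a n.+1) + (y - x) * a n.+2 by ring.
  rewrite !ha !exprS; ring.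
Qed.

Lemma series1 (a : nat -> R) :
  (forall r, (y - x) * a r = (- x) * A ^+ r.+1 - (- y) * B ^+ r.+1) ->
  fps_mulg (series_Ag 1 a) (fun n => (denomTg d)`_n) =1 (fun n => (numT1g d - denomTg d)`_n).
Proof.
move=> ha n.
have s0 : series_Ag 1 a 0 = 0 by [].
have sS : forall m, series_Ag 1 a m.+1 = a m by move=> m; rewrite /series_Ag /= subn1.
apply: (mulfI hxy); rewrite coefB numT_eq coefD coef1 coefCM coefX Dcoef.
case: n => [|[|[|n]]].
- rewrite fps_0 s0 /=; ring.
- rewrite fps_1 s0 sS !Dcoef /= mul0r add0r mulr1 ha !expr1 /A /B /c1g /F; ring.
- rewrite (fps_S2 _ _ Dhi) s0 !sS !Dcoef /= mul0r add0r mulr1 mulr0 add0r.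
  have -> : (y - x) * (a 0%N * - (A + B) + a 1%N) = - (A + B) * ((y - x) * a 0%N) + (y - x) * a 1%N by ring.
  rewrite !ha !exprS !expr0; ring.
- rewrite (fps_S2 _ _ Dhi) !sS !Dcoef /= mulr1.
  have -> : (y - x) * (a n * (A * B) + a n.+1 * - (A + B) + a n.+2) =
    (A * B) * ((y - x) * a n) - (A + B) * ((y - x) * a n.+1) + (y - x) * a n.+2 by ring.
  rewrite !ha !exprS; ring.
Qed.

Lemma final0 (al : nat -> {poly R}) : (forall r, al r = alpha0g x y d r 0) ->
  fps_mulg (series_Ag 0 (fun r => (al r).[((d.+1)./2)%:R * c1g])) (fun n => (denomTg d)`_n)
  =1 (fun n => ((d%:R : R)%:P)`_n).
Proof.
move=> ea; apply: series0 => r.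
by rewrite ea evalA // expr0 !mul1r evA evB.
Qed.

Lemma final1 (al : nat -> {poly R}) : (forall r, al r = alpha0g x y d r 1) ->
  fps_mulg (series_Ag 1 (fun r => (al r).[((d.+1)./2)%:R * c1g])) (fun n => (denomTg d)`_n)
  =1 (fun n => (numT1g d - denomTg d)`_n).
Proof.
move=> ea; apply: series1 => r.
by rewrite ea evalA // !expr1 evA evB.
Qed.

End S.

Lemma evalS0 (R : idomainType) (x y h : R) d r :
  (alpha0g x y d r 0).[h] =
  d%:R * \sum_(i < r.+1) (h + wtg x y d d) ^+ (r - i) * (h + wtg x y d 0) ^+ i.
Proof.
rewrite /alpha0g /S0g hornerZ horner_sum /=; congr (_ * _); apply: eq_bigr => i _.
by rewrite hornerM !horner_exp /aXg /bXg !hornerD !hornerX !hornerC.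
Qed.

Lemma evalS1 (R : idomainType) (x y h : R) d r :
  (alpha0g x y d r 1).[h] = - x * (alpha0g x y d r 0).[h] + (h + wtg x y d 0) ^+ r.+1.
Proof.
by rewrite /alpha0g hornerD hornerZ horner_exp /bXg hornerD hornerX hornerC.
Qed.


Lemma homogE n (p : RT) : is_homog n p = (p \is n.-homog).
Proof. by []. Qed.

Lemma hX (i : 'I_2) : ('X_i : RT) \is 1.-homog.
Proof. by rewrite dhomogX /= mdeg1. Qed.

Lemma hl1 : l1 \is 1.-homog. Proof. exact: hX. Qed.
Lemma hl2 : l2 \is 1.-homog. Proof. exact: hX. Qed.

Lemma h_natmul n k (p : RT) : p \is n.-homog -> k%:R * p \is n.-homog.
Proof. by move=> hp; rewrite mulr_natl rpredMn. Qed.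

Lemma h_eq n m (p : RT) : n = m -> p \is n.-homog -> p \is m.-homog.
Proof. by move=> ->. Qed.

Lemma h_lin (p : RT) k1 k2 : is_homog 1 (k1%:R * l1 + k2%:R * l2).
Proof. by rewrite homogE; apply: rpredD; apply: h_natmul; [exact: hl1 | exact: hl2]. Qed.

Lemma h_c1 : c1 \is 1.-homog.
Proof. by rewrite /c1 rpredN; apply: rpredD; [exact: hl1 | exact: hl2]. Qed.

Lemma h_u e d j : (e%:R * c1 + wtg l1 l2 d j) \is 1.-homog.
Proof.
apply: rpredD; first by apply: h_natmul; exact: h_c1.
by rewrite /wtg; apply: rpredD; apply: h_natmul; [exact: hl1 | exact: hl2].
Qed.

Lemma h_alpha0 d r e : (alpha0g l1 l2 d r 0).[e%:R * c1] \is r.-homog.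
Proof.
rewrite evalS0; apply: h_natmul; apply: rpred_sum => i _.
apply: (@h_eq (1 * (r - i) + 1 * i)%N); first by move: (ltn_ord i); lia.
by apply: dhomogM; apply: dhomogMn; apply: h_u.
Qed.

Lemma h_alpha1 d r e : (alpha0g l1 l2 d r 1).[e%:R * c1] \is r.+1.-homog.
Proof.
rewrite evalS1; apply: rpredD.
  apply: (@h_eq (1 + r)%N) => //; apply: dhomogM.
    by rewrite rpredN; exact: hl1.
  exact: h_alpha0.
by apply: (@h_eq (1 * r.+1)%N); [lia | apply: dhomogMn; apply: h_u].
Qed.

Theorem mainTheorem8 (d : nat) (hd : odd d) :
  (forall k : nat, (k <= 1)%N -> forall r : nat,
     exists alpha : {poly RT}, is_pushforward1 d r k alpha) /\
  (forall alpha : nat -> {poly RT},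
     (forall r, is_pushforward1 d r 0 (alpha r)) ->
     (forall r, is_homog r (eval_half d (alpha r))) /\
     fps_mul (series_A 0 (fun r => eval_half d (alpha r))) (fps_of_poly (denomT d))
       =1 fps_of_poly (d%:R%:P)) /\
  (forall alpha : nat -> {poly RT},
     (forall r, is_pushforward1 d r 1 (alpha r)) ->
     (forall r, is_homog r.+1 (eval_half d (alpha r))) /\
     fps_mul (series_A 1 (fun r => eval_half d (alpha r))) (fps_of_poly (denomT d))
       =1 fps_of_poly (numT1 d - denomT d)).
Proof.
have Hd : d = (d./2).*2.+1 by rewrite -[LHS]odd_double_half hd.
move: (d./2) Hd => f Hd; subst d.
have d0 : (0 < f.*2.+1)%N by [].
have P k r : (k <= 1)%N -> is_pushforward1 f.*2.+1 r k (alpha0g l1 l2 f.*2.+1 r k).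
  by move=> hk; exact: (pushA lnz r d0 hk).
have U k r a : (k <= 1)%N -> is_pushforward1 f.*2.+1 r k a -> a = alpha0g l1 l2 f.*2.+1 r k.
  by move=> hk ha; exact: (push_uniq lnz ha (P k r hk)).
split; first by move=> k hk r; exists (alpha0g l1 l2 f.*2.+1 r k); exact: P.
split.
  move=> alpha ha.
  have ea : forall r, alpha r = alpha0g l1 l2 f.*2.+1 r 0 by move=> r; exact: U.
  split; first by move=> r; rewrite /eval_half ea homogE; exact: h_alpha0.
  exact: (final0 lnz ea).
move=> alpha ha.
have ea : forall r, alpha r = alpha0g l1 l2 f.*2.+1 r 1 by move=> r; exact: U.
split; first by move=> r; rewrite /eval_half ea homogE; exact: h_alpha1.
exact: (final1 lnz ea).
Qed.
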